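(* For every positive integer $k$, $NPO(k)$ is well defined (finite) and $NPO(k) \le R(k,k+1)$.
   Context: All graphs are finite, simple and undirected; $A(G)$ denotes the adjacency matrix of $G$. Eigenvalues are counted with multiplicity. For a positive integer $k$, $NPO(k)$ is the smallest integer $n$ such that the adjacency matrix of every graph with at least $n$ vertices has at least $k$ nonpositive eigenvalues. The Ramsey number $R(m,n)$ is the minimum number $N$ such that every graph on at least $N$ vertices has either an independent set of size $m$ or an induced subgraph isomorphic to the complete graph $K_n$. *)

(* Defs.v *)
From HB Require Import structures.
From mathcomp Require Import all_boot all_order all_algebra all_field.
Set Implicit Arguments. Unset Strict Implicit. Unset Printing Implicit Defensive.
Import Order.TTheory GRing.Theory Num.Theory.
Local Open Scope ring_scope.

Definition simple_graph (n : nat) (e : rel 'I_n) : Prop :=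
  symmetric e /\ irreflexive e.

(* Adjacency matrix A(G), with entries in algC (algebraic complex numbers,
   an algebraically closed field containing all eigenvalues). *)
Definition adj_mx (n : nat) (e : rel 'I_n) : 'M[algC]_n :=
  \matrix_(i, j) (e i j)%:R.

(* s is the multiset of eigenvalues of A (counted with multiplicity):
   the characteristic polynomial factors as prod_(r in s) (X - r). *)
Definition is_spectrum (n : nat) (A : 'M[algC]_n) (s : seq algC) : Prop :=
  char_poly A = \prod_(r <- s) ('X - r%:P).

(* A has at least k nonpositive eigenvalues (counted with multiplicity).
   In algC, (r <= 0) means r is real and nonpositive. *)
Definition has_k_nonpos_eigs (k n : nat) (A : 'M[algC]_n) : Prop :=
  exists s : seq algC, is_spectrum A s /\ (k <= count (fun r : algC => (r <= 0)%R) s)%N.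

Definition NPO_prop (k N : nat) : Prop :=
  forall (m : nat) (e : rel 'I_m), (N <= m)%N -> simple_graph e ->
    has_k_nonpos_eigs k (adj_mx e).

Definition is_NPO (k n : nat) : Prop :=
  NPO_prop k n /\ forall N, NPO_prop k N -> (n <= N)%N.

Definition has_indep_set (m : nat) (N : nat) (e : rel 'I_N) : Prop :=
  exists S : {set 'I_N}, #|S| = m /\ {in S &, forall x y, ~~ e x y}.

Definition has_clique (m : nat) (N : nat) (e : rel 'I_N) : Prop :=
  exists S : {set 'I_N}, #|S| = m /\ {in S &, forall x y, x != y -> e x y}.

Definition Ramsey_prop (a b N : nat) : Prop :=
  forall (m : nat) (e : rel 'I_m), (N <= m)%N -> simple_graph e ->
    has_indep_set a e \/ has_clique b e.

Definition is_Ramsey (a b R : nat) : Prop :=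
  Ramsey_prop a b R /\ forall N, Ramsey_prop a b N -> (R <= N)%N.

(* Main.v *)
Require Import Defs.
From HB Require Import structures.
From mathcomp Require Import all_boot all_order all_algebra all_field.
From Stdlib Require Classical_Prop.
From mathcomp Require Import zify.
Import Order.TTheory GRing.Theory Num.Theory.
Local Open Scope ring_scope.
Set Implicit Arguments. Unset Strict Implicit. Unset Printing Implicit Defensive.
Lemma char_poly_similar (R : comNzRingType) n (P Q D : 'M[R]_n) :
  Q *m P = 1%:M -> char_poly (Q *m D *m P) = char_poly D.
Proof.
move=> QP.
rewrite /char_poly /char_poly_mx.
have -> : 'X%:M - map_mx (@polyC R) (Q *m D *m P) =
   map_mx (@polyC R) Q *m ('X%:M - map_mx (@polyC R) D) *m map_mx (@polyC R) P.
  rewrite mulmxBr mulmxBl !map_mxM; congr (_ - _).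
  by rewrite mul_mx_scalar -scalemxAl -map_mxM QP map_mx1 scalemx1.
by rewrite !det_mulmx mulrAC -det_mulmx -map_mxM QP map_mx1 det1 mul1r.
Qed.
Lemma cnt (n : nat) (p : pred 'I_n) : count p (enum 'I_n) = #|p|.
Proof. by rewrite cardE -size_filter; congr size; rewrite !enumT /enum_mem. Qed.

Local Open Scope sesquilinear_scope.

Definition qf n (A : 'M[algC]_n) (x : 'rV[algC]_n) : algC := (x *m A *m x ^t*) 0 0.

Lemma spec_count n k (A : 'M[algC]_n) (W : 'M[algC]_(k, n)) :
  A \is hermsymmx -> row_free W ->
  (forall v : 'rV_k, qf A (v *m W) <= 0) ->
  exists s : seq algC, char_poly A = \prod_(r <- s) ('X - r%:P) /\
     (k <= count (fun r : algC => (r <= 0)%R) s)%N.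
Proof.
move=> Aherm Wfree Wneg.
set P := spectralmx A; set d := spectral_diag A.
have Aeq : A = invmx P *m diag_mx d *m P.
  by apply/orthomx_spectralP/hermitian_normalmx.
have Pu : P \is unitarymx := spectral_unitarymx A.
have invP : invmx P = P ^t* := invmx_unitary Pu.
have PPt : P *m P ^t* = 1%:M by apply/unitarymxP.
have PtP : P ^t* *m P = 1%:M by rewrite -invP mulVmx // spectral_unit.
have dreal : forall i, d 0 i \is Num.real.
  by move=> i; have /mxOverP := hermitian_spectral_diag_real Aherm; apply.
exists [seq d 0 i | i <- enum 'I_n]; split.
  rewrite big_map big_enum /= {1}Aeq char_poly_similar; last by rewrite mulVmx // spectral_unit.
  rewrite char_poly_trig ?diag_mx_is_trig //; apply: eq_bigr => i _.
  by rewrite mxE eqxx mulr1n.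
rewrite count_map cnt.
set N := [set i | d 0 i <= 0].
rewrite (@eq_card _ _ N); last by move=> j; rewrite !inE.
rewrite leqNgt; apply/negP => Nk.
pose M : 'M_(k, #|N|) := \matrix_(j, l) (W *m P ^t*) j (enum_val l).
have : ~~ row_free M.
  rewrite /row_free; apply/negP => /eqP rk.
  by move: (rank_leq_col M); rewrite rk leqNgt Nk.
rewrite -kermx_eq0 => /negP kN0.
have [i vN0] : exists i, row i (kermx M) != 0.
  apply/existsP; rewrite -negb_forall; apply/negP => /forallP H; apply: kN0.
  by apply/eqP/row_matrixP => i; rewrite row0; apply/eqP/H.
set v := row i (kermx M) in vN0.
have vM : v *m M = 0 by rewrite /v -row_mul mulmx_ker row0.
set x := v *m W.
have xN0 : x != 0 by rewrite /x mulmx_free_eq0.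
set y := x *m P ^t*.
have xy : x = y *m P by rewrite /y -mulmxA PtP mulmx1.
have yN0 : y != 0 by apply: contraNneq xN0; rewrite xy => ->; rewrite mul0mx.
have yN : forall j, j \in N -> y 0 j = 0.
  move=> j Nj.
  have H : (v *m (W *m P ^t*)) 0 j = (v *m M) 0 (enum_rank_in Nj j).
    by rewrite !mxE; apply: eq_bigr => l _; rewrite !mxE enum_rankK_in.
  by rewrite /y /x -mulmxA H vM mxE.
have qy : qf A x = \sum_j (y 0 j * d 0 j) * (y 0 j)^*.
  rewrite /qf xy Aeq invP trmx_mul map_mxM.
  have -> : y *m P *m (P ^t* *m diag_mx d *m P) *m (P ^t* *m y ^t*)
      = y *m diag_mx d *m y ^t*.
    by rewrite !mulmxA -(mulmxA y) PPt mulmx1 -(mulmxA _ P) PPt mulmx1.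
  by rewrite mul_mx_diag mxE; apply: eq_bigr => j _; rewrite !mxE.
have := Wneg v; rewrite -/x qy; apply/negP; rewrite lt_geF //.
have [j0 yj0] : exists j, y 0 j != 0.
  apply/existsP; move: yN0; apply: contraR => /existsPn H. idtac.
  by apply/eqP; apply/rowP => j; move: (H j); rewrite negbK => /eqP ->; rewrite mxE.
have dpos : forall j, j \notin N -> 0 < d 0 j.
  by move=> j; rewrite inE => Nj; rewrite real_ltNge ?real0.
have tge0 : forall j, 0 <= y 0 j * d 0 j * (y 0 j)^*.
  move=> j; case: (boolP (j \in N)) => Nj; first by rewrite yN // !mul0r.
  by rewrite mulrAC mulr_ge0 ?mul_conjC_ge0 // ltW // dpos.
rewrite (bigD1 j0) //=.
have Nj0 : j0 \notin N by apply: contra yj0 => /yN ->.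
apply: ltr_wpDr; first by apply: sumr_ge0 => j _; apply: tge0.
by rewrite mulrAC mulr_gt0 ?mul_conjC_gt0 // dpos.
Qed.


Lemma adj_herm m (e : rel 'I_m) : symmetric e -> adj_mx e \is hermsymmx.
Proof.
move=> sym; apply/is_hermitianmxP; rewrite expr0 scale1r; apply/matrixP => i j.
by rewrite !mxE conjC_nat sym.
Qed.

Lemma qf_expand m (A : 'M[algC]_m) (x : 'rV_m) :
  qf A x = \sum_i \sum_l A i l * (x 0 i * (x 0 l)^*).
Proof.
rewrite /qf mxE exchange_big /=; apply: eq_bigr => l _.
rewrite !mxE big_distrl /=; apply: eq_bigr => i _.
by rewrite mulrA [x 0 i * _]mulrC.
Qed.

Definition NPE k n (A : 'M[algC]_n) := exists s : seq algC, char_poly A = \prod_(r <- s) ('X - r%:P) /\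
     (k <= count (fun r : algC => (r <= 0)%R) s)%N.

Lemma indep_case m k (e : rel 'I_m) (f : 'I_k -> 'I_m) : symmetric e ->
  injective f -> (forall a b, ~~ e (f a) (f b)) -> NPE k (adj_mx e).
Proof.
move=> sym finj ind.
pose W : 'M[algC]_(k, m) := \matrix_(j, i) (i == f j)%:R.
have xE : forall (v : 'rV_k) a, (v *m W) 0 (f a) = v 0 a.
  move=> v a; rewrite mxE (bigD1 a) //= big1 ?addr0; first by rewrite mxE eqxx mulr1.
  by move=> j ja; rewrite mxE (inj_eq finj) eq_sym (negbTE ja) mulr0.
have xS : forall (v : 'rV_k) i, (v *m W) 0 i != 0 -> exists a, i = f a.
  move=> v i xi; case: (pickP (fun a => i == f a)) => [a /eqP ->|H]; first by exists a.
  move: xi; rewrite mxE big1 ?eqxx // => j _.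
  by rewrite mxE (H j) mulr0.
apply: (@spec_count _ _ _ W); first exact: adj_herm.
  apply/inj_row_free => v vW; apply/rowP => a; rewrite -xE vW !mxE //.
move=> v; rewrite qf_expand big1 // => i _; rewrite big1 // => l _.
case: (eqVneq ((v *m W) 0 i) 0) => [->|/xS [a ->]]; first by rewrite !mul0r mulr0.
case: (eqVneq ((v *m W) 0 l) 0) => [->|/xS [b ->]]; first by rewrite conjC0 !mulr0.
by rewrite mxE (negbTE (ind a b)) mul0r.
Qed.

Lemma sum_delta m (c : 'I_m) : \sum_(i < m) ((i == c)%:R : algC) = 1.
Proof.
by rewrite (bigD1 c) //= eqxx big1 ?addr0 // => i /negbTE ->.
Qed.

Lemma clique_case m k (e : rel 'I_m) (g : 'I_k.+1 -> 'I_m) : symmetric e ->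
  irreflexive e ->
  injective g -> (forall a b, a != b -> e (g a) (g b)) -> NPE k (adj_mx e).
Proof.
move=> sym irr ginj cl.
pose h j := g (lift ord_max j).
have hinj : injective h by move=> a b /ginj /lift_inj.
have hmax : forall j, (h j == g ord_max) = false.
  by move=> j; rewrite (inj_eq ginj) eq_sym (negbTE (neq_lift _ _)).
pose W : 'M[algC]_(k, m) := \matrix_(j, i) ((i == h j)%:R - (i == g ord_max)%:R).
have xE : forall (v : 'rV_k) a, (v *m W) 0 (h a) = v 0 a.
  move=> v a; rewrite mxE (bigD1 a) //= big1 ?addr0; first by rewrite mxE eqxx hmax subr0 mulr1.
  by move=> j ja; rewrite mxE (inj_eq hinj) eq_sym (negbTE ja) hmax subr0 mulr0.
have xS : forall (v : 'rV_k) i, (v *m W) 0 i != 0 -> exists a, i = g a.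
  move=> v i xi; case: (pickP (fun a => i == g a)) => [a /eqP ->|H]; first by exists a.
  move: xi; rewrite mxE big1 ?eqxx // => j _.
  by rewrite mxE (H (lift ord_max j)) (H ord_max) subrr mulr0.
have xsum : forall v : 'rV_k, \sum_i (v *m W) 0 i = 0.
  move=> v; rewrite (eq_bigr (fun i => \sum_j v 0 j * W j i)); last by move=> i _; rewrite mxE.
  rewrite exchange_big /= big1 // => j _; rewrite -mulr_sumr.
  rewrite (eq_bigr (fun i => (i == h j)%:R - (i == g ord_max)%:R)); last by move=> i _; rewrite mxE.
  by rewrite sumrB !sum_delta subrr mulr0.
apply: (@spec_count _ _ _ W); first exact: adj_herm.
  apply/inj_row_free => v vW; apply/rowP => a; rewrite -xE vW !mxE //.
move=> v; rewrite qf_expand; set x := v *m W.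
have -> : \sum_i \sum_l adj_mx e i l * (x 0 i * (x 0 l)^*) =
          \sum_i \sum_l (x 0 i * (x 0 l)^*) - \sum_i (x 0 i * (x 0 i)^*).
  rewrite -sumrB; apply: eq_bigr => i _.
  rewrite (bigD1 i) //= [X in _ = X - _](bigD1 i) //= addrAC subrr add0r.
  rewrite mxE irr mul0r add0r; apply: eq_bigr => l li.
  case: (eqVneq (x 0 i) 0) => [->|/xS [a ia]]; first by rewrite !mul0r mulr0.
  case: (eqVneq (x 0 l) 0) => [->|/xS [b lb]]; first by rewrite conjC0 !mulr0.
  rewrite mxE ia lb cl ?mul1r //; apply: contraNneq li => ab.
  by rewrite ia lb ab.
rewrite (eq_bigr (fun i => x 0 i * (\sum_l x 0 l)^*)); last first.
  by move=> i _; rewrite rmorph_sum mulr_sumr.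
rewrite xsum conjC0 big1 ?add0r; last by move=> i _; rewrite mulr0.
by rewrite oppr_le0 sumr_ge0 // => i _; rewrite mul_conjC_ge0.
Qed.

Lemma ramsey_gen m (e : rel 'I_m) : symmetric e -> forall n a b (X : {set 'I_m}),
  (a + b = n)%N -> (2 ^ n <= #|X|)%N ->
  (exists S : {set 'I_m}, S \subset X /\ #|S| = a /\ {in S &, forall x y, x != y -> ~~ e x y}) \/
  (exists S : {set 'I_m}, S \subset X /\ #|S| = b /\ {in S &, forall x y, x != y -> e x y}).
Proof.
move=> sym n; elim: n => [|n IH] a b X.
  move=> /eqP; rewrite addn_eq0 => /andP [/eqP -> _] _; left; exists set0.
  by rewrite sub0set cards0; split => //; split => // x y; rewrite inE.
case: a => [|a]; first by move=> _ _; left; exists set0; rewrite sub0set cards0; split => //; split => // x y; rewrite inE.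
case: b => [|b]; first by move=> _ _; right; exists set0; rewrite sub0set cards0; split => //; split => // x y; rewrite inE.
move=> abn Xc.
have e1 : (a.+1 + b = n)%N by lia.
have e2 : (a + b.+1 = n)%N by lia.
have [v vX] : exists v, v \in X.
  apply/set0Pn; rewrite -card_gt0; apply: leq_trans Xc; by rewrite expn_gt0.
set X' := X :\ v.
set Nb := X' :&: [set u | e v u]; set Nn := X' :\: [set u | e v u].
have cX' : #|X'| = #|X|.-1 by rewrite (cardsD1 v X) vX.
have cNN : (#|Nb| + #|Nn| = #|X'|)%N by rewrite cardsID.
have [bigNb | smallNb] := leqP (2 ^ n) #|Nb|.
  have [[S [SN [cS iS]]]|[S [SN [cS cS']]]] := IH a.+1 b Nb e1 bigNb.
    left; exists S; split => //; apply: subset_trans SN _.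
    by apply: subset_trans (subsetIl _ _) (subD1set _ _).
  right; exists (v |: S).
  have vS : v \notin S by apply/negP => /(subsetP SN); rewrite !inE eqxx /= ?andbF.
  split; first by rewrite subUset sub1set vX; apply: subset_trans SN (subset_trans (subsetIl _ _) (subD1set _ _)).
  split; first by rewrite cardsU1 vS cS.
  have Sv : forall u, u \in S -> e v u by move=> u /(subsetP SN); rewrite !inE => /andP [_].
  move=> x y; rewrite !inE => /orP [/eqP ->|xS] /orP [/eqP ->|yS]; rewrite ?eqxx //.
  - by move=> _; apply: Sv.
  - by move=> _; rewrite sym; apply: Sv.
  - by apply: cS'.
have bigNn : (2 ^ n <= #|Nn|)%N.
  rewrite expnS in Xc; lia.
have [[S [SN [cS iS]]]|[S [SN [cS cS']]]] := IH a b.+1 Nn e2 bigNn.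
  left; exists (v |: S).
  have vS : v \notin S by apply/negP => /(subsetP SN); rewrite !inE eqxx /= ?andbF.
  split; first by rewrite subUset sub1set vX; apply: subset_trans SN (subset_trans (subsetDl _ _) (subD1set _ _)).
  split; first by rewrite cardsU1 vS cS.
  have Sv : forall u, u \in S -> ~~ e v u by move=> u /(subsetP SN); rewrite !inE => /andP [].
  move=> x y; rewrite !inE => /orP [/eqP ->|xS] /orP [/eqP ->|yS]; rewrite ?eqxx //.
  - by move=> _; apply: Sv.
  - by move=> _; rewrite sym; apply: Sv.
  - by apply: iS.
right; exists S; split => //; apply: subset_trans SN _.
by apply: subset_trans (subsetDl _ _) (subD1set _ _).
Qed.

Lemma ex_min (P : nat -> Prop) N : P N -> exists n, P n /\ forall m, P m -> (n <= m)%N.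
Proof.
move=> PN; apply: Classical_Prop.NNPP => H.
have: forall j m, (m < j)%N -> ~ P m.
  elim=> [|j IH] m //; rewrite ltnS leq_eqVlt => /orP [/eqP ->|lt]; last exact: IH.
  move=> Pj; apply: H; exists j; split => // m' Pm'; rewrite leqNgt; apply/negP => lt'.
  exact: IH lt' Pm'.
by move/(_ N.+1 N (ltnSn N)).
Qed.

Lemma key k R : Ramsey_prop k k.+1 R -> NPO_prop k R.
Proof.
move=> RP m e hm [sym irr]; case: (RP m e hm (conj sym irr)) => [[S [cS iS]]|[S [cS cS']]].
  pose f (j : 'I_k) : 'I_m := enum_val (cast_ord (esym cS) j).
  apply: (@indep_case _ _ _ f sym).
    by move=> a b /enum_val_inj /cast_ord_inj.
  by move=> a b; apply: iS; apply: enum_valP.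
pose g (j : 'I_k.+1) : 'I_m := enum_val (cast_ord (esym cS) j).
apply: (@clique_case _ _ _ g sym irr).
  by move=> a b /enum_val_inj /cast_ord_inj.
move=> a b ab; apply: cS'; try apply: enum_valP.
by apply: contra ab => /eqP /enum_val_inj /cast_ord_inj ->.
Qed.

Theorem mainTheorem1 (k : nat) (hk : (0 < k)%N) :
  exists n : nat, is_NPO k n /\
    exists R : nat, is_Ramsey k k.+1 R /\ (n <= R)%N.
Proof.
have RP : Ramsey_prop k k.+1 (2 ^ (k + k.+1)).
  move=> m e hm [sym irr].
  have := @ramsey_gen m e sym (k + k.+1) k k.+1 setT (erefl _).
  rewrite cardsT card_ord => /(_ hm).
  case=> [[S [_ [cS iS]]]|[S [_ [cS cS']]]]; [left|right]; exists S; split => //.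
  move=> x y xS yS; case: (eqVneq x y) => [->|xy]; first by rewrite irr.
  exact: iS.
have [R [RR Rmin]] := ex_min RP.
have [n [Nn nmin]] := ex_min (key RR).
exists n; split; first by split.
by exists R; split; [split | exact: nmin (key RR)].
Qed.
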